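(* Let $q\ge 1$ and $n$ be integers with $n\ge q-1$, let $a_1,\dots,a_n\in\mathbb{Z}_q$ be reduced residues (i.e. $\gcd(a_i,q)=1$ for all $i$), and let $\rho\in\mathbb{Z}_q$. Then the number of the $2^n$ choices $(\varepsilon_1,\dots,\varepsilon_n)\in\{0,1\}^n$ for which $\sum_{i=1}^n\varepsilon_i a_i\equiv\rho\pmod q$ is at least $\binom{n}{\lceil (n-q)/2\rceil}_q$. Moreover, this bound is best possible: for all such $q,n$ there exist reduced residues $a_1,\dots,a_n$ and a residue $\rho$ for which equality holds.
   Context: $\mathbb{Z}_q$ denotes the integers modulo $q$. For an integer $s$, the mod $q$ binomial coefficient is $\binom{n}{s}_q=|\{A\subseteq\{1,\dots,n\}: |A|\equiv s \pmod q\}|=\sum_{j\equiv s\ (\mathrm{mod}\ q),\,0\le j\le n}\binom{n}{j}$. *)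

(* Defs.v *)
From mathcomp Require Import all_boot all_order all_algebra.
Set Implicit Arguments. Unset Strict Implicit. Unset Printing Implicit Defensive.
Import GRing.Theory Num.Theory.

Definition binom_mod (n : nat) (s : int) (q : nat) : nat :=
  \sum_(0 <= j < n.+1 | ((j%:Z) == s %[mod q%:Z])%Z) 'C(n, j).

(* ceil(m / 2) for an integer m:  ceil(x) = - floor(-x); intdiv's %/ by a
   positive divisor is the floor. *)
Definition ceil_half (m : int) : int := (- (((- m)%R %/ 2)%Z))%R.

Definition nsols (n q : nat) (a : 'I_n -> nat) (rho : nat) : nat :=
  #|[set e : {ffun 'I_n -> bool} |
      (\sum_(i < n) (e i : nat) * a i == rho %[mod q])%N]|.

(* Main.v *)
Require Import Defs.
From mathcomp Require Import all_boot all_order all_algebra.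
From mathcomp Require Import zify.
Set Implicit Arguments. Unset Strict Implicit. Unset Printing Implicit Defensive.

Definition Ssum n (a : 'I_n -> nat) (e : {ffun 'I_n -> bool}) := \sum_(i < n) (e i : nat) * a i.

Lemma split_ffun n (a : 'I_n.+1 -> nat) (F : nat -> nat) :
  \sum_(e : {ffun 'I_n.+1 -> bool}) F (Ssum a e) =
  \sum_(e : {ffun 'I_n -> bool}) F (Ssum (fun i => a (lift ord0 i)) e) +
  \sum_(e : {ffun 'I_n -> bool}) F (a ord0 + Ssum (fun i => a (lift ord0 i)) e).
Proof.
pose h : bool * {ffun 'I_n -> bool} -> {ffun 'I_n.+1 -> bool} := fun p =>
  [ffun i => if unlift ord0 i is Some j then p.2 j else p.1].
pose h' : {ffun 'I_n.+1 -> bool} -> bool * {ffun 'I_n -> bool} :=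
  fun e => (e ord0, [ffun j => e (lift ord0 j)]).
rewrite (reindex h); last first.
  exists h' => [[b e'] _ | e _].
    rewrite /h /h' /= ffunE unlift_none; congr (_, _).
    by apply/ffunP => j; rewrite !ffunE liftK.
  apply/ffunP => i; rewrite /h /h' !ffunE /=.
  by case: unliftP => [j ->|->]; rewrite ?ffunE.
rewrite -(pair_bigA _ (fun b e => F (Ssum a (h (b, e))))) /= big_bool /= addnC.
have E b e : Ssum a (h (b, e)) = b * a ord0 + Ssum (fun i => a (lift ord0 i)) e.
  rewrite /Ssum big_ord_recl /h !ffunE unlift_none /=; congr (_ + _).
  by apply: eq_bigr => i _; rewrite ffunE liftK.
congr (_ + _); apply: eq_bigr => e _; rewrite E //= mul1n //.
Qed.

Definition Bn q n t := \sum_(j < n.+1) (j == t %[mod q]) * 'C(n, j).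
Definition st q n k := (n + 3 * q + 2 - k) %/ 2.
Definition Phi q n k := \sum_(i < k) Bn q n (st q n k + i).

Lemma Bn_pascal q n t : Bn q n.+1 t.+1 = Bn q n t.+1 + Bn q n t.
Proof.
rewrite /Bn big_ord_recl /= bin0 muln1.
have E (i : 'I_n.+1) : (bump 0 i == t.+1 %[mod q]) * 'C(n.+1, bump 0 i)
   = (i == t %[mod q]) * 'C(n, i.+1) + (i == t %[mod q]) * 'C(n, i).
  have -> : (bump 0 i == t.+1 %[mod q]) = (i == t %[mod q]).
    by rewrite /bump /= add1n -[i.+1]addn1 -[t.+1]addn1 eqn_modDr.
  by rewrite /bump /= add1n binS mulnDr.
rewrite (eq_bigr _ (fun i _ => E i)) big_split /= addnA; congr (_ + _).
rewrite [in RHS]big_ord_recl /= bin0 muln1 big_ord_recr /=.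
rewrite bin_small // muln0 addn0.
have -> : \sum_(i < n) (bump 0 i == t.+1 %[mod q]) * 'C(n, bump 0 i) =
   \sum_(i < n) (i == t %[mod q]) * 'C(n, i.+1).
  apply: eq_bigr => i _.
by rewrite -[bump 0 i]/(i.+1) -[i.+1]addn1 -[t.+1]addn1 eqn_modDr.
reflexivity.
Qed.

Lemma Bn_per q n t : Bn q n (t + q) = Bn q n t.
Proof. by apply: eq_bigr => j _; rewrite modnDr. Qed.

Lemma sum_per (g : nat -> nat) q : (forall t, g (t + q) = g t) ->
  forall c, \sum_(i < q) g (c + i) = \sum_(i < q) g i.
Proof.
move=> Hg; elim=> [|c IH]; first by [].
case: q Hg IH => [|q] Hg IH; first by rewrite !big_ord0.
have E1 : \sum_(i < q.+1) g (c.+1 + i) = \sum_(i < q) g (c.+1 + i) + g (c.+1 + q)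
  by rewrite big_ord_recr.
have E2 : \sum_(i < q.+1) g (c + i) = g c + \sum_(i < q) g (c + i.+1)
  by rewrite big_ord_recl addn0.
have E3 : \sum_(i < q) g (c.+1 + i) = \sum_(i < q) g (c + i.+1)
  by apply: eq_bigr => i _; rewrite addSnnS.
have E4 : g (c.+1 + q) = g c by rewrite addSnnS Hg.
lia.
Qed.

Lemma Phi0 q n : Phi q n 0 = 0.
Proof. by rewrite /Phi big_ord0. Qed.

Lemma Phi_rec q n k : 0 < k -> k < q -> Phi q n.+1 k = Phi q n k.-1 + Phi q n k.+1.
Proof.
case: k => [//|k] _ hk /=.
have h1 : st q n.+1 k.+1 = st q n k by rewrite /st; lia.
have h2 : st q n.+1 k.+1 = (st q n k.+2).+1 by rewrite /st; lia.
rewrite /Phi h1; rewrite h1 in h2; rewrite h2.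
set d := st q n k.+2.
have E1 : \sum_(i < k.+1) Bn q n.+1 (d.+1 + i) =
   \sum_(i < k.+1) Bn q n (d.+1 + i) + \sum_(i < k.+1) Bn q n (d + i).
  by rewrite -big_split; apply: eq_bigr => i _; rewrite addSn Bn_pascal.
have E2 : \sum_(i < k.+1) Bn q n (d.+1 + i) = \sum_(i < k) Bn q n (d.+1 + i) + Bn q n (d + k.+1)
  by rewrite big_ord_recr addSnnS.
have E3 : \sum_(i < k.+2) Bn q n (d + i) = \sum_(i < k.+1) Bn q n (d + i) + Bn q n (d + k.+1)
  by rewrite big_ord_recr.
lia.
Qed.

Lemma Phi_q q n : 0 < q -> Phi q n.+1 q = 2 * Phi q n q.
Proof.
move=> hq.
have h2 : st q n.+1 q = (st q n.+1 q).-1.+1 by rewrite /st; lia.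
rewrite /Phi h2.
set d := (st q n.+1 q).-1.
rewrite (eq_bigr (fun i : 'I_q => Bn q n (d.+1 + i) + Bn q n (d + i))); last first.
  by move=> i _; rewrite addSn Bn_pascal.
rewrite big_split /= !(sum_per (g := Bn q n)) //; try exact: Bn_per.
by rewrite mul2n addnn.
Qed.

Lemma Bn0 q t : Bn q 0 t = (0 == t %[mod q]).
Proof. by rewrite /Bn big_ord1 /= bin0 muln1. Qed.

Lemma Phi_0_small q k : k < q -> Phi q 0 k = 0.
Proof.
move=> hk; rewrite /Phi big1 // => i _; rewrite Bn0 mod0n.
set t := st q 0 k + i.
have h1 : q < t by rewrite /t /st; lia.
have h2 : t < q + q by rewrite /t /st; have := ltn_ord i; lia.
rewrite -(subnK (ltnW h1)) modnDr modn_small; last by lia.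
by case: eqP => //; lia.
Qed.

Lemma Phi_0_q q : 0 < q -> Phi q 0 q = 1.
Proof.
move=> hq; rewrite /Phi (sum_per (g := Bn q 0)); last exact: Bn_per.
case: q hq => [//|q] _; rewrite big_ord_recl /= Bn0 mod0n eqxx big1 // => i _.
by rewrite Bn0 /bump /= add1n mod0n modn_small // ltnS ltn_ord.
Qed.

Definition convex_on (F : nat -> nat) q := forall i, i.+2 <= q -> 2 * F i.+1 <= F i + F i.+2.

Lemma convex_mono F q : convex_on F q -> forall a d, a + d < q ->
  F a.+1 + F (a + d) <= F a + F (a + d).+1.
Proof.
move=> hc a; elim=> [|d IH] h; first by rewrite addn0; lia.
have h' : a + d < q by rewrite addnS in h; lia.
have h1 := IH h'.
have h2 := hc (a + d) ltac:(rewrite addnS in h; lia).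
rewrite addnS; lia.
Qed.

Lemma convex_spread F q : convex_on F q -> forall k j, 1 <= j -> j <= k -> k + j <= q ->
  F k.-1 + F k.+1 <= F (k - j) + F (k + j).
Proof.
move=> hc k; elim=> [//|j IH] h1 h2 h3.
case: j IH h1 h2 h3 => [|j] IH _ h2 h3.
  by rewrite subn1 addn1.
have h4 : k + j.+1 <= q by lia.
have := IH erefl (ltnW h2) h4.
have := @convex_mono F q hc (k - j.+2) (j.+1 + j.+2) ltac:(lia).
have e1 : (k - j.+2).+1 = k - j.+1 by lia.
have e2 : k - j.+2 + (j.+1 + j.+2) = k + j.+1 by lia.
have e3 : k + j.+2 = (k + j.+1).+1 by lia.
rewrite e1 e2 e3; lia.
Qed.

Lemma convex_step (F G : nat -> nat) q : G 0 = 0 -> F 0 = 0 -> F q = 2 * G q ->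
  (forall k, 0 < k -> k < q -> F k = G k.-1 + G k.+1) -> convex_on G q -> convex_on F q.
Proof.
move=> G0 F0 Fq Fk hc [|i] hi.
  have f1 := Fk 1 erefl hi.
  have [e|ne] := eqVneq q 2.
    subst q; rewrite Fq F0 f1 G0 /=; lia.
  have f2 := Fk 2 erefl ltac:(lia).
  have := hc 1 ltac:(lia).
  rewrite F0 f1 f2 G0 /=; lia.
have f1 := Fk i.+1 erefl ltac:(lia).
have f2 := Fk i.+2 erefl ltac:(lia).
have c0 := hc i ltac:(lia).
have [e|ne] := eqVneq q i.+3.
  subst q; rewrite Fq f1 f2 /=; lia.
have f3 := Fk i.+3 erefl ltac:(lia).
have c2 := hc i.+2 ltac:(lia).
rewrite f1 f2 f3 /=; lia.
Qed.

Lemma Phi_convex q n : 0 < q -> convex_on (Phi q n) q.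
Proof.
move=> hq; elim: n => [|n IH].
  move=> i hi; rewrite (Phi_0_small (k := i)) ?(Phi_0_small (k := i.+1)) //; lia.
apply: (convex_step (G := Phi q n)) => //; try exact: Phi0.
  exact: Phi_q.
by move=> k h1 h2; rewrite Phi_rec.
Qed.

Definition ordq q (hq : 0 < q) z : 'I_q := Ordinal (ltn_pmod z hq).

Definition fq q n (a : 'I_n -> nat) x :=
  \sum_(e : {ffun 'I_n -> bool}) (Ssum a e == x %[mod q]).
Definition NX q n (a : 'I_n -> nat) (X : {set 'I_q}) := \sum_(x in X) fq q a x.

Lemma sum_ind q (hq : 0 < q) (X : {set 'I_q}) z :
  \sum_(x in X) (z == x %[mod q]) = (ordq hq z \in X).
Proof.
rewrite (eq_bigr (fun x => (x == ordq hq z) : nat)); last first.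
  move=> x _; rewrite (modn_small (ltn_ord x)) eq_sym.
  by rewrite -val_eqE.
case: (boolP (ordq hq z \in X)) => hr.
  rewrite (bigD1 (ordq hq z)) //= eqxx big1 // => y /andP[_ ne].
  by rewrite (negbTE ne).
rewrite big1 // => y yX; case: eqP => // e; subst y.
by rewrite yX in hr.
Qed.

Lemma NX_alt q (hq : 0 < q) n (a : 'I_n -> nat) X :
  NX a X = \sum_(e : {ffun 'I_n -> bool}) (ordq hq (Ssum a e) \in X).
Proof.
rewrite /NX /fq exchange_big /=; apply: eq_bigr => e _.
exact: sum_ind.
Qed.

Definition tau q (hq : 0 < q) b (y : 'I_q) : 'I_q := ordq hq (y + b).

Lemma tau_inj q (hq : 0 < q) b : injective (tau hq b).
Proof.
move=> y1 y2 /(congr1 val) /= /eqP; rewrite -/(_ == _ %[mod q]) eqn_modDr.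
by rewrite !modn_small // => /eqP e; apply: val_inj.
Qed.

Lemma NX_rec q (hq : 0 < q) n (a : 'I_n.+1 -> nat) (X : {set 'I_q}) :
  NX a X = NX (fun i : 'I_n => a (lift ord0 i)) X +
             NX (fun i : 'I_n => a (lift ord0 i)) (tau hq (a ord0) @^-1: X).
Proof.
rewrite !(NX_alt hq) (split_ffun a (fun z => (ordq hq z \in X) : nat)).
congr (_ + _); apply: eq_bigr => e _; rewrite inE.
congr (nat_of_bool (_ \in X)); apply: val_inj => /=.
by rewrite modnDml addnC.
Qed.

Lemma NX_UI q (hq : 0 < q) n (a : 'I_n -> nat) (X Y : {set 'I_q}) :
  NX a X + NX a Y = NX a (X :|: Y) + NX a (X :&: Y).
Proof.
rewrite !(NX_alt hq) -!big_split; apply: eq_bigr => e _.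
rewrite in_setU in_setI.
by case: (ordq hq (Ssum a e) \in X); case: (ordq hq (Ssum a e) \in Y).
Qed.

Lemma full_set q (X : {set 'I_q}) : q <= #|X| -> X = setT.
Proof.
move=> h; apply/eqP; rewrite eqEcard subsetT cardsT card_ord //.
Qed.

Lemma shift_fixed q (hq : 0 < q) b (X : {set 'I_q}) :
  coprime b q -> tau hq b @^-1: X = X -> 0 < #|X| -> X = setT.
Proof.
move=> cop eqY; rewrite card_gt0 => /set0Pn [x xX].
have cl y : (tau hq b y \in X) = (y \in X).
  by rewrite -{2}eqY inE.
have orb m : ordq hq (x + m * b) \in X.
  elim: m => [|m IH].
    have -> : ordq hq (x + 0 * b) = x by apply: val_inj; rewrite /= mul0n addn0 modn_small.
    done.
  rewrite -cl in IH.
  have -> : ordq hq (x + m.+1 * b) = tau hq b (ordq hq (x + m * b)) .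
    by apply: val_inj; rewrite /= modnDml mulSn; congr (_ %% q); lia.
  done.
have [c _ hc] := Bezoutr b hq.
move: cop; rewrite /coprime => /eqP g1; rewrite g1 in hc.
move/dvdnP: hc => [k hk].
apply/setP => z; rewrite inE.
set r := x + q - z.
have hr : r + z = x + q by rewrite /r; have := ltn_ord z; have := ltn_ord x; lia.
have -> : z = ordq hq (x + (r * c) * b).
  apply: val_inj => /=.
  set A := x + r * c * b.
  have H1 : (A + r) %% q = x %% q.
    have -> : A + r = (r * k) * q + x.
      rewrite /A -mulnA -mulnA -hk; lia.
    by rewrite modnMDl.
  have H2 : (A + x) %% q = (z + x) %% q.
    have e1 : A + r + z = (A + x) + q by lia.
    have : (A + r + z) %% q = (x + z) %% q by rewrite -modnDml H1 modnDml.
    by move=> h; rewrite e1 modnDr in h; rewrite h [z + x]addnC.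
  have : (A + x == z + x %[mod q]) by apply/eqP.
  by rewrite eqn_modDr => /eqP ->; rewrite modn_small.
exact: orb.
Qed.


Lemma main q (hq : 0 < q) n : forall (a : 'I_n -> nat), (forall i, coprime (a i) q) ->
  forall X : {set 'I_q}, Phi q n #|X| <= NX a X.
Proof.
elim: n => [|n IH] a cop X.
  rewrite (NX_alt hq).
  have [lt|ge] := ltnP #|X| q; first by rewrite Phi_0_small.
  have -> : X = setT by exact: full_set.
  rewrite cardsT card_ord Phi_0_q //.
  rewrite (eq_bigr (fun _ => 1)); last by move=> e _; rewrite in_setT.
  by rewrite sum_nat_const card_ffun card_ord.
have [a' ea'] : {a' : 'I_n -> nat | a' = fun i : 'I_n => a (lift ord0 i)} by exists (fun i : 'I_n => a (lift ord0 i)).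
have cop' : forall i, coprime (a' i) q by move=> i; rewrite ea'; exact: cop.
have [Y eY] : {Y : {set 'I_q} | Y = tau hq (a ord0) @^-1: X} by exists (tau hq (a ord0) @^-1: X).
have cY : #|Y| = #|X| by rewrite eY card_preimset //; exact: tau_inj.
rewrite (NX_rec hq) -ea' -eY.
have [k0|kpos] := posnP #|X|; first by rewrite k0 Phi0.
have [klt|kge] := ltnP #|X| q; last first.
  have kq : #|X| = q by have := subset_leq_card (subsetT X); rewrite cardsT card_ord; lia.
  rewrite kq Phi_q // mul2n -addnn.
  have h1 := IH a' cop' X; have h2 := IH a' cop' Y.
  by rewrite cY kq in h2; rewrite kq in h1; apply: leq_add.
rewrite (NX_UI hq).
have hU := IH a' cop' (X :|: Y); have hI := IH a' cop' (X :&: Y).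
have cUI : #|X :|: Y| + #|X :&: Y| = #|X| + #|Y| := cardsUI X Y.
have sU : #|X| <= #|X :|: Y| by apply: subset_leq_card; exact: subsetUl.
have mU : #|X :|: Y| <= q by have := subset_leq_card (subsetT (X :|: Y)); rewrite cardsT card_ord.
have neq : #|X :|: Y| != #|X|.
  apply/negP => /eqP e.
  have e1 : X == X :|: Y by rewrite eqEcard subsetUl e leqnn.
  have e2 : Y == X :|: Y by rewrite eqEcard subsetUr e -cY leqnn.
  have YX : Y = X by rewrite (eqP e2) -(eqP e1).
  have := shift_fixed (cop ord0) (etrans (esym eY) YX) kpos => XT.
  by move: klt; rewrite XT cardsT card_ord ltnn.
have conv := convex_spread (Phi_convex n hq) (k := #|X|) (j := #|X :|: Y| - #|X|).
have e1 : #|X| + (#|X :|: Y| - #|X|) = #|X :|: Y| by lia.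
have e2 : #|X| - (#|X :|: Y| - #|X|) = #|X :&: Y| by lia.
rewrite e1 e2 in conv.
rewrite Phi_rec //.
have := conv ltac:(lia) ltac:(lia) ltac:(lia).
lia.
Qed.

Lemma nsols_fq q n (a : 'I_n -> nat) rho : nsols q a rho = fq q a rho.
Proof.
rewrite /nsols -sum1_card big_mkcond /=; apply: eq_bigr => e _.
by rewrite inE; case: (_ == _).
Qed.

Lemma fq_per q n (a : 'I_n -> nat) t : fq q a (t + q) = fq q a t.
Proof. by apply: eq_bigr => e _; rewrite modnDr. Qed.

Lemma NX_set1 q (hq : 0 < q) n (a : 'I_n -> nat) rho :
  NX a [set ordq hq rho] = fq q a rho.
Proof. by rewrite /NX big_set1; apply: eq_bigr => e _; rewrite /= modn_mod. Qed.

Lemma fq_ones q (hq : 0 < q) n t : fq q (fun _ : 'I_n => 1) t = Bn q n t.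
Proof.
elim: n t => [|n IH] t.
  rewrite /fq Bn0 (eq_bigr (fun _ => (0 == t %[mod q]) : nat)); last first.
    by move=> e _; rewrite /Ssum big_ord0.
  by rewrite sum_nat_const card_ffun !card_ord expn0 mul1n.
have suc u : fq q (fun _ : 'I_n.+1 => 1) u.+1 = Bn q n.+1 u.+1.
  rewrite /fq (split_ffun _ (fun z => (z == u.+1 %[mod q]) : nat)) Bn_pascal.
  rewrite -!IH; congr (_ + _).
  by apply: eq_bigr => e _; rewrite -[u.+1]add1n eqn_modDl.
case: t => [|t]; last exact: suc.
rewrite -fq_per -Bn_per.
have e : 0 + q = q.-1.+1 by lia.
rewrite e; exact: suc.
Qed.

Lemma Phi1 q n : Phi q n 1 = Bn q n (st q n 1).
Proof. by rewrite /Phi big_ord1 addn0. Qed.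

Lemma link q n : binom_mod n (ceil_half (n%:Z - q%:Z)%R) q = Bn q n (st q n 1).
Proof.
have e : ceil_half (n%:Z - q%:Z)%R = ((st q n 1)%:Z - (2 * q)%N%:Z)%R.
  by rewrite /ceil_half /st; lia.
rewrite /binom_mod e big_mkord big_mkcond /=; apply: eq_bigr => j _.
have -> : ((j%:Z == (st q n 1)%:Z - (2 * q)%N%:Z %[mod q%:Z])%Z) = (j == st q n 1 %[mod q]).
  have -> : ((st q n 1)%:Z - (2 * q)%N%:Z = (- 2%:Z) * q%:Z + (st q n 1)%:Z)%R.
    lia.
  by rewrite modzMDl !modz_nat eqz_nat.
by case: (_ == _); rewrite ?mul1n ?mul0n.
Qed.

Unset Implicit Arguments.

Theorem corollary2 (q n : nat) (hq : (1 <= q)%N) (hn : (q.-1 <= n)%N) :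
  (forall (a : 'I_n -> nat) (rho : nat),
      (forall i, coprime (a i) q) ->
      (binom_mod n (ceil_half (n%:Z - q%:Z)%R) q <= nsols q a rho)%N)
  /\
  (exists (a : 'I_n -> nat) (rho : nat),
      (forall i, coprime (a i) q) /\
      nsols q a rho = binom_mod n (ceil_half (n%:Z - q%:Z)%R) q).
Proof.
split.
  move=> a rho cop.
  rewrite link -Phi1 nsols_fq -(NX_set1 hq).
  have := main hq cop [set ordq hq rho].
  by rewrite cards1.
exists (fun _ => 1), (st q n 1); split; first by move=> i; exact: coprime1n.
by rewrite link nsols_fq fq_ones.
Qed.
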